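(* There exists an infinite sequence $\{(G_n,\tau_n)\}_{n\ge1}$ of finite simple graphs $G_n$ with threshold assignments $\tau_n$ such that $|G_n|\to\infty$, $\epsilon(G_n)/|G_n| = o(\overline{\tau_n})$, and $$\lim_{n\to\infty}\frac{Ldyn_{\overline{\tau_n}}(G_n)}{|G_n|}=1.$$
   Context: For a graph $G$, $|G|$ is the number of vertices and $\epsilon(G)=|E(G)|/|G|$. A threshold assignment is a function $\tau:V(G)\to\{0,1,2,\dots\}$ with $0\le\tau(v)\le deg_G(v)$ for all $v$; its average is $\overline{\tau}=\sum_v\tau(v)/|G|$. A set $D\subseteq V(G)$ is a $\tau$-dynamo if $V(G)$ can be partitioned into $D_0=D,D_1,\dots,D_k$ such that for each $1\le i\le k$, $D_i$ consists of all vertices not in $D_0\cup\dots\cup D_{i-1}$ having at least $\tau(v)$ neighbors in $D_0\cup\dots\cup D_{i-1}$; $dyn_\tau(G)$ is the minimum size of a $\tau$-dynamo. For $t>0$, $Ldyn_t(G)=\max\{dyn_\tau(G): \overline{\tau}\le t\}$. *)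

(* Defs.v *)
From mathcomp Require Import all_boot.
From Stdlib Require Import Reals ClassicalEpsilon.
Set Implicit Arguments. Unset Strict Implicit. Unset Printing Implicit Defensive.

Section Graphs.
Variable T : finType.
Variable e : rel T.

Definition simple_graph : Prop := symmetric e /\ irreflexive e.

Definition edges : {set {set T}} :=
  [set E : {set T} | [exists x, [exists y, e x y && (E == [set x; y])]]].

Definition eps : R := (INR #|edges| / INR #|T|)%R.

Definition deg (v : T) : nat := #|[set w | e v w]|.

Definition threshold (tau : T -> nat) : Prop := forall v, tau v <= deg v.

Definition avg (tau : T -> nat) : R := (INR (\sum_(v : T) tau v) / INR #|T|)%R.

Definition step (tau : T -> nat) (S : {set T}) : {set T} :=
  S :|: [set v | (v \notin S) && (tau v <= #|[set w in S | e v w]|)].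

Definition dynamo (tau : T -> nat) (D : {set T}) : Prop :=
  exists k, iter k (step tau) D = setT.

Definition dynamob (tau : T -> nat) (D : {set T}) : bool :=
  if excluded_middle_informative (dynamo tau D) then true else false.

(* dyn_tau(G): minimum size of a tau-dynamo (V(G) itself is one) *)
Definition dyn (tau : T -> nat) : nat :=
  \big[minn/#|T|]_(D : {set T} | dynamob tau D) #|D|.

Definition Rleb (a b : R) : bool := if Rle_dec a b then true else false.

(* Ldyn_t(G) = max { dyn_tau(G) : tau threshold assignment, avg tau <= t }.
   Threshold assignments take values <= deg v <= #|T|, so they are
   exactly the valid functions T -> 'I_(#|T|.+1). *)
Definition Ldyn (t : R) : nat :=
  \max_(tau : {ffun T -> 'I_(#|T|.+1)} |
          [forall v, (tau v : nat) <= deg v] && Rleb (avg (fun v => tau v)) t)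
     dyn (fun v => tau v).

End Graphs.

(* Main.v *)
Require Import Defs.
From mathcomp Require Import all_boot.
From Stdlib Require Import Reals Lra Lia ClassicalEpsilon.

Section K.
Variable T : finType.
Definition ek : rel T := fun x y => x != y.

Lemma deg_ek v : deg ek v = #|T|.-1.
Proof.
rewrite /deg -(cardsC1 v); apply: eq_card => w; rewrite !inE /ek eq_sym //.
Qed.

Lemma dyn_le_card tau : dyn ek tau <= #|T|.
Proof.
rewrite /dyn; apply: (big_ind (fun x => x <= #|T|)); first by [].
- by move=> x y hx hy; rewrite geq_min hx.
by move=> D _; exact: max_card.
Qed.

Lemma dyn_ge tau : (forall v, tau v = #|T|.-1) -> #|T|.-1 <= dyn ek tau.
Proof.
move=> Ht; rewrite /dyn; apply: (big_ind (fun x => #|T|.-1 <= x)).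
- exact: leq_pred.
- by move=> x y hx hy; rewrite leq_min hx.
move=> D; rewrite /dynamob; case: excluded_middle_informative => // [[k Hk]] _.
rewrite leqNgt; apply/negP => hD.
have Hs : step ek tau D = D.
  rewrite /step; apply/setP => v; rewrite !inE Ht.
  case: (v \in D) => //=; apply/negbTE; rewrite -ltnNge.
  apply: leq_ltn_trans hD; apply: subset_leq_card; apply/subsetP => w.
  by rewrite inE => /andP[].
have : iter k (step ek tau) D = D by elim: k {Hk} => //= k ->.
rewrite Hk => HD; move: hD; rewrite -HD cardsT.
case: #|T| => // m /=; by rewrite ltnNge leqnSn.
Qed.

Lemma dyn_ge' tau k : #|T| = k.+1 -> (forall v, tau v = k) -> k <= dyn ek tau.
Proof. move=> hT Ht; have := @dyn_ge tau; rewrite hT /=; exact. Qed.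

Lemma dyn_le' tau k : #|T| = k -> dyn ek tau <= k.
Proof. move=> <-; exact: dyn_le_card. Qed.

Lemma edges_ek : #|edges ek| <= #|T| * #|T|.
Proof.
have -> : #|T| * #|T| = #|[set: T * T]| by rewrite cardsT card_prod.
have : edges ek \subset [set [set p.1; p.2] | p in [set: T * T]].
  apply/subsetP => E; rewrite inE => /existsP[x /existsP[y /andP[_ /eqP->]]].
  by apply/imsetP; exists (x, y); rewrite ?inE.
move/subset_leq_card=> h; apply: leq_trans h _; exact: leq_imset_card.
Qed.
End K.

Theorem proposition3 :
  exists (N : nat -> nat) (e : forall n, rel 'I_(N n))
         (tau : forall n, 'I_(N n) -> nat),
    (forall n, simple_graph (e n)) /\
    (forall n, threshold (e n) (tau n)) /\
    (* |G_n| -> infinity *)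
    (forall M : nat, exists n0, forall n, (n0 <= n)%nat -> (M <= N n)%nat) /\
    (* eps(G_n)/|G_n| = o(avg tau_n) *)
    (forall c : R, (0 < c)%R -> exists n0, forall n, (n0 <= n)%nat ->
        (Rabs (eps (e n) / INR (N n)) <= c * Rabs (avg (tau n)))%R) /\
    (* Ldyn_{avg tau_n}(G_n) / |G_n| -> 1 *)
    Un_cv (fun n => (INR (Ldyn (e n) (avg (tau n))) / INR (N n))%R) 1%R.
Proof.
have Havg : forall n, avg (fun _ : 'I_n.+2 => n.+1) = INR n.+1.
  move=> n; rewrite /avg big_const.
  rewrite iter_addn_0 mult_INR !card_ord.
  have : (0 < INR n.+2)%R by apply: lt_0_INR; apply/ltP.
  move=> h; field; lra.
have HL : forall n, n.+1 <= Ldyn (@ek 'I_n.+2) (INR n.+1) <= n.+2.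
  move=> n; apply/andP; split.
  - pose t0 : {ffun 'I_n.+2 -> 'I_(#|'I_n.+2|.+1)} := [ffun _ => inord n.+1].
    have Ht0 : forall v, (t0 v : nat) = n.+1.
      by move=> v; rewrite ffunE inordK // card_ord.
    apply: leq_trans (leq_bigmax_cond t0 _).
      exact: (@dyn_ge' _ (fun v => (t0 v : nat)) n.+1 (card_ord _) Ht0).
    apply/andP; split.
      by apply/forallP => v; rewrite Ht0 (deg_ek _ v) card_ord.
    rewrite /Rleb; case: Rle_dec => // [[]].
    have -> : avg (fun v => t0 v) = avg (fun _ : 'I_n.+2 => n.+1).
      by rewrite /avg; congr (_ / _)%R; congr INR; apply: eq_bigr => v _; rewrite Ht0.
    rewrite Havg; lra.
  - rewrite /Ldyn; apply: (big_ind (fun x => x <= n.+2)) => //.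
      by move=> x y hx hy; rewrite geq_max hx.
    move=> t _; exact: (@dyn_le' _ (fun v => (t v : nat)) _ (card_ord _)).
exists (fun n => n.+2), (fun n => @ek 'I_n.+2), (fun n _ => n.+1).
split; [|split; [|split; [|split]]].
- move=> n; split; first by move=> x y; rewrite /ek eq_sym.
  by move=> x; rewrite /ek eqxx.
- by move=> n v; rewrite (deg_ek _ v) card_ord.
- by move=> M; exists M => n hn; apply: leq_trans hn _; apply: leqW; apply: leqW.
- move=> c hc; have [M [hM hM0]] := archimed_cor1 c hc.
  exists M => n hn; rewrite Havg.
  have hN : (0 < INR n.+2)%R by apply: lt_0_INR; apply/ltP.
  have hE : (INR #|edges (@ek 'I_n.+2)| <= INR n.+2 * INR n.+2)%R.
    rewrite -mult_INR; apply: le_INR; apply/leP.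
    by have := edges_ek 'I_n.+2; rewrite card_ord.
  have hE0 := pos_INR #|edges (@ek 'I_n.+2)|.
  have h1 : (eps (@ek 'I_n.+2) / INR n.+2 <= 1)%R.
    rewrite /eps card_ord /Rdiv Rmult_assoc -Rinv_mult.
    apply (Rmult_le_reg_r (INR n.+2 * INR n.+2)); first nra.
    rewrite Rmult_assoc Rinv_l; nra.
  have h0 : (0 <= eps (@ek 'I_n.+2) / INR n.+2)%R.
    rewrite /eps card_ord; apply: Rmult_le_pos; last by left; apply: Rinv_0_lt_compat.
    apply: Rmult_le_pos => //; left; by apply: Rinv_0_lt_compat.
  have hM1 : (0 < INR M)%R by apply: lt_0_INR.
  have hMn : (INR M <= INR n.+1)%R by apply: le_INR; apply/leP; apply: leqW.
  have : (1 < c * INR M)%R.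
    apply (Rmult_lt_reg_r (/ INR M)); first by apply: Rinv_0_lt_compat.
    rewrite Rmult_assoc Rinv_r; lra.
  move=> hc1; rewrite (Rabs_pos_eq _ h0) (Rabs_pos_eq _ (pos_INR _)).
  have : (c * INR M <= c * INR n.+1)%R by apply: Rmult_le_compat_l; lra.
  lra.
- move=> eps0 he; have [M [hM hM0]] := archimed_cor1 eps0 he.
  exists M => n hn; rewrite /R_dist Havg.
  have /andP[h1 h2] := HL n.
  have hN : (0 < INR n.+2)%R by apply: lt_0_INR; apply/ltP.
  have r1 : (INR n.+1 <= INR (Ldyn (@ek 'I_n.+2) (INR n.+1)))%R by apply: le_INR; apply/leP.
  have r2 : (INR (Ldyn (@ek 'I_n.+2) (INR n.+1)) <= INR n.+2)%R by apply: le_INR; apply/leP.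
  have e2 : INR n.+2 = (INR n.+1 + 1)%R by rewrite S_INR.
  have hM1 : (0 < INR M)%R by apply: lt_0_INR.
  have hMn : (INR M <= INR n.+2)%R by apply: le_INR; lia.
  have hi : (/ INR n.+2 < eps0)%R.
    apply: Rle_lt_trans hM; apply: Rinv_le_contravar => //.
  set L := INR (Ldyn _ _) in r1 r2 *.
  have -> : (L / INR n.+2 - 1 = - ((INR n.+2 - L) * / INR n.+2))%R by field; lra.
  rewrite Rabs_Ropp Rabs_right; last first.
    apply: Rle_ge; apply: Rmult_le_pos; [lra | left; by apply: Rinv_0_lt_compat].
  apply: Rle_lt_trans hi.
  have hinv : (0 < / INR n.+2)%R by apply: Rinv_0_lt_compat.
  have : ((INR n.+2 - L) <= 1)%R by lra.
  nra.
Qed.
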